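(* Let $(V,\le,\preccurlyeq)$ be a mixed lattice vector space equipped with a vector topology $\tau$. Consider: (a) $\tau$ is locally symmetric-solid; (b) $\tau$ is locally $(\le)$-full and the mixed lattice operations are continuous at zero; (c) the mixed lattice operations $(x,y)\mapsto x\curlyvee y$ and $(x,y)\mapsto x\curlywedge y$ are uniformly continuous; (d) $\tau$ is locally mixed-full and the mixed lattice operations are continuous at zero. Then (a) and (b) are equivalent, each of them implies (c), and (c) implies (d).
   Context: A mixed lattice vector space $(V,\le,\preccurlyeq)$ is a real vector space $V$ with two partial orderings $\le$ (initial order) and $\preccurlyeq$ (specific order), each making $V$ a partially ordered vector space, with positive cones $V_p=\{x:0\le x\}$, $V_{sp}=\{x:0\preccurlyeq x\}$, such that: (1) for all $x,y$ the elements $x\curlyvee y=\min\{w: w\succcurlyeq x,\ w\ge y\}$ and $x\curlywedge y=\max\{w: w\preccurlyeq x,\ w\le y\}$ exist (min/max with respect to $\le$); (2) $x\preccurlyeq y$ implies $x\le y$; (3) $x\curlyvee y, x\curlywedge y\in V_{sp}$ whenever $x,y\in V_{sp}$. The mixed lattice operations are $(x,y)\mapsto x\curlyvee y$ and $(x,y)\mapsto x\curlywedge y$; ''continuous at zero'' means continuous at $(0,0)$. Notation: $x^u=0\curlyvee x$, $x^l=0\curlyvee(-x)$, $s(x)=x^u+x^l$. A set $A$ is symmetric-solid if $x\in A$ and $s(y)\le s(x)$ imply $y\in A$; it is $(\le)$-full if $x,y\in A$ and $y\le z\le x$ imply $z\in A$. $\tau$ is locally symmetric-solid (resp. locally $(\le)$-full)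 if it has a base of neighborhoods of zero consisting of symmetric-solid (resp. $(\le)$-full) sets. $\tau$ is locally mixed-full if every neighborhood of zero contains a neighborhood $W$ of zero such that $y\in W$ and $0\preccurlyeq x\le y$ imply $x\in W$. Uniform continuity of $g:V\times V\to V$: for each neighborhood $W$ of $0$ there is a neighborhood $U$ of $0$ such that $x-x'\in U$, $y-y'\in U$ imply $g(x,y)-g(x',y')\in W$. *)

(* Defs.v *)
From HB Require Import structures.
From mathcomp Require Import all_boot all_order all_algebra.
From mathcomp Require Import all_classical all_reals all_analysis.
Set Implicit Arguments. Unset Strict Implicit. Unset Printing Implicit Defensive.
Import Order.TTheory GRing.Theory Num.Theory.
Local Open Scope classical_set_scope.
Local Open Scope ring_scope.

Section MixedLattice.
Variables (R : realType) (V : lmodType R).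
Variables (le sle : V -> V -> Prop) (mj mm : V -> V -> V).

Definition ordered_vs (r : V -> V -> Prop) : Prop :=
  [/\ (forall x, r x x),
      (forall x y, r x y -> r y x -> x = y),
      (forall x y z, r x y -> r y z -> r x z),
      (forall x y z, r x y -> r (x + z) (y + z)) &
      (forall (a : R) x y, 0 <= a -> r x y -> r (a *: x) (a *: y))].

(* mj x y = x curlyvee y = min_{le} {w | x <<= w, y <= w}
   mm x y = x curlywedge y = max_{le} {w | w <<= x, w <= y}
   (these are unique when they exist, by antisymmetry of le) *)
Definition mixed_lattice_vs : Prop :=
  [/\ ordered_vs le /\ ordered_vs sle,
      (forall x y, [/\ sle x (mj x y), le y (mj x y) &
                     forall w, sle x w -> le y w -> le (mj x y) w]),
      (forall x y, [/\ sle (mm x y) x, le (mm x y) y &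
                     forall w, sle w x -> le w y -> le w (mm x y)]),
      (forall x y, sle x y -> le x y) &
      (forall x y, sle 0 x -> sle 0 y -> sle 0 (mj x y) /\ sle 0 (mm x y))].

Definition ml_s (x : V) : V := mj 0 x + mj 0 (- x).

Definition symmetric_solid (A : set V) : Prop :=
  forall x y, A x -> le (ml_s y) (ml_s x) -> A y.

Definition le_full (A : set V) : Prop :=
  forall x y z, A x -> A y -> le y z -> le z x -> A z.

Definition mixed_full (W : set V) : Prop :=
  forall x y, W y -> sle 0 x -> le x y -> W x.
End MixedLattice.

Section Topo.
Variables (R : realType) (V : topologicalLmodType R).

Definition locally_P (P : set V -> Prop) : Prop :=
  forall U, nbhs (0 : V) U -> exists W, [/\ nbhs (0 : V) W, P W & W `<=` U].

Definition cont_at_zero (g : V -> V -> V) : Prop :=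
  {for ((0 : V), (0 : V)), continuous (fun p : V * V => g p.1 p.2)}.

Definition unif_cont2 (g : V -> V -> V) : Prop :=
  forall W, nbhs (0 : V) W -> exists U, nbhs (0 : V) U /\
    forall x x' y y', U (x - x') -> U (y - y') -> W (g x y - g x' y').
End Topo.

(* Main.v *)
Require Import Defs.
From HB Require Import structures.
From mathcomp Require Import all_boot all_order all_algebra.
From mathcomp Require Import all_classical all_reals all_analysis.
Import Order.TTheory GRing.Theory Num.Theory.
Local Open Scope classical_set_scope.
Local Open Scope ring_scope.
Set Implicit Arguments. Unset Strict Implicit.

Section T.
Context (R : realType) (V : topologicalLmodType R).

Lemma sum_small (U : set V) : nbhs 0 U ->
  exists N : set V, nbhs 0 N /\ forall a b, N a -> N b -> U (a + b).
Proof.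
move=> hU.
have := add_continuous ((0 : V), (0 : V)). rewrite /continuous_at /= addr0 => /(_ U hU).
move=> [[P Q] /= [P0 Q0] sub].
exists (P `&` Q); split; first exact: filterI.
by move=> a b [Pa _] [_ Qb]; apply: (sub (a, b)).
Qed.

Lemma neg_small (U : set V) : nbhs 0 U -> nbhs 0 (fun x => U (- x)).
Proof.
move=> hU; have := opp_continuous (0 : V). rewrite /continuous_at oppr0 => /(_ U hU).
done.
Qed.

Lemma three_small (U : set V) : nbhs 0 U ->
  exists N : set V, nbhs 0 N /\ forall a b c, N a -> N b -> N c ->
    U (a + (b + c)) /\ U (a - (b + c)).
Proof.
move=> /sum_small [N1 [h1 s1]].
have hM : nbhs 0 (N1 `&` (fun x => N1 (- x))) by apply: filterI => //; exact: neg_small.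
have [N2 [h2 s2]] := sum_small hM.
exists (N1 `&` N2); split; first exact: filterI.
move=> a b c [Na _] [_ Nb] [_ Nc]; have [M1 M2] := s2 _ _ Nb Nc.
by split; apply: s1.
Qed.

Lemma cont_from_unif (g : V -> V -> V) : unif_cont2 g -> g 0 0 = 0 -> cont_at_zero g.
Proof.
move=> hg g00; rewrite /cont_at_zero /prop_for /continuous_at /= g00 => W hW.
have [U [hU HU]] := hg W hW.
exists (U, U) => //= -[p q] /= [Up Uq].
by have := HU p 0 q 0; rewrite !subr0 g00 subr0; apply.
Qed.
End T.
Section OV.
Context (R : realType) (V : lmodType R) (r : V -> V -> Prop) (Hr : ordered_vs r).

Lemma ov_refl x : r x x. Proof. by case: Hr. Qed.
Lemma ov_anti x y : r x y -> r y x -> x = y. Proof. by case: Hr => _ h _ _ _; apply: h. Qed.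
Lemma ov_trans x y z : r x y -> r y z -> r x z. Proof. by case: Hr => _ _ h _ _; apply: h. Qed.
Lemma ov_addr x y z : r x y -> r (x + z) (y + z). Proof. by case: Hr => _ _ _ h _; apply: h. Qed.
Lemma ov_addl x y z : r x y -> r (z + x) (z + y).
Proof. by move=> h; rewrite ![z + _]addrC; apply: ov_addr. Qed.
Lemma ov_add2 a b c d : r a b -> r c d -> r (a + c) (b + d).
Proof. by move=> h1 h2; apply: (ov_trans (ov_addr c h1)); apply: ov_addl. Qed.
Lemma ov_opp x y : r x y -> r (- y) (- x).
Proof.
move=> h; have := ov_addr (- x - y) h.
by rewrite addrA subrr add0r addrCA subrr addr0.
Qed.
Lemma ov_pos_add a b : r 0 a -> r 0 b -> r 0 (a + b).
Proof. by move=> h1 h2; have := ov_add2 h1 h2; rewrite addr0. Qed.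
Lemma ov_sub1 a b c : r a (b + c) -> r (a - b) c.
Proof. by move=> h; have := ov_addr (- b) h; rewrite addrAC subrr add0r. Qed.
Lemma ov_sub2 a b c : r a (b + c) -> r (- c) (b - a).
Proof.
move=> h; have := ov_addr (- a - c) h.
by rewrite addrA subrr add0r addrACA subrr addr0.
Qed.
Lemma ov_sub3 a b c : r (b + c) a -> r c (a - b).
Proof. by move=> h; have := ov_addr (- b) h; rewrite addrAC subrr add0r. Qed.
Lemma ov_sub4 a b c : r (a + c) b -> r (a - b) (- c).
Proof.
move=> h; have := ov_addr (- b - c) h.
by rewrite addrACA subrr addr0 addrA subrr add0r.
Qed.
End OV.

Section ML.
Context (R : realType) (V : lmodType R) (le sle : V -> V -> Prop) (mj mm : V -> V -> V).
Hypothesis H : mixed_lattice_vs le sle mj mm.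

Let Hle : ordered_vs le. Proof. by case: H => -[]. Qed.
Let Hsle : ordered_vs sle. Proof. by case: H => -[]. Qed.
Let Hsl x y : sle x y -> le x y. Proof. by case: H => _ _ _ h _; apply: h. Qed.
Lemma mj_ub1 x y : sle x (mj x y). Proof. by case: H => _ h _ _ _; case: (h x y). Qed.
Lemma mj_ub2 x y : le y (mj x y). Proof. by case: H => _ h _ _ _; case: (h x y). Qed.
Lemma mj_least x y w : sle x w -> le y w -> le (mj x y) w.
Proof. by case: H => _ h _ _ _; case: (h x y) => _ _; apply. Qed.
Lemma mm_lb1 x y : sle (mm x y) x. Proof. by case: H => _ _ h _ _; case: (h x y). Qed.
Lemma mm_lb2 x y : le (mm x y) y. Proof. by case: H => _ _ h _ _; case: (h x y). Qed.
Lemma mm_great x y w : sle w x -> le w y -> le w (mm x y).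
Proof. by case: H => _ _ h _ _; case: (h x y) => _ _; apply. Qed.

Local Notation s := (ml_s mj).

Lemma mj_mono y y' : le y y' -> le (mj 0 y) (mj 0 y').
Proof.
move=> h; apply: mj_least; first exact: mj_ub1.
by apply: (ov_trans Hle h); apply: mj_ub2.
Qed.
Lemma u_spos x : sle 0 (mj 0 x). Proof. exact: mj_ub1. Qed.
Lemma u_pos x : le 0 (mj 0 x). Proof. exact/Hsl/mj_ub1. Qed.
Lemma u_ge x : le x (mj 0 x). Proof. exact: mj_ub2. Qed.
Lemma s_spos x : sle 0 (s x). Proof. rewrite /ml_s; apply: (ov_pos_add Hsle); apply: u_spos. Qed.
Lemma s_pos x : le 0 (s x). Proof. exact/Hsl/s_spos. Qed.
Lemma s_ge x : le x (s x).
Proof. by have := ov_add2 Hle (u_ge x) (u_pos (- x)); rewrite addr0. Qed.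
Lemma s_geN x : le (- x) (s x).
Proof. by have := ov_add2 Hle (u_pos x) (u_ge (- x)); rewrite add0r. Qed.
Lemma sN x : s (- x) = s x. Proof. by rewrite /ml_s opprK addrC. Qed.
Lemma s_idem p : sle 0 p -> s p = p.
Proof.
move=> hp; have e1 : mj 0 p = p.
  apply: (ov_anti Hle); last exact: mj_ub2.
  by apply: mj_least => //; exact: ov_refl.
have e2 : mj 0 (- p) = 0.
  apply: (ov_anti Hle); last exact: u_pos.
  apply: mj_least; first exact: ov_refl.
  by rewrite -oppr0; apply: (ov_opp Hle); apply: Hsl.
by rewrite /ml_s e1 e2 addr0.
Qed.
Lemma mj00 : mj 0 0 = 0.
Proof.
apply: (ov_anti Hle); last exact: u_pos.
by apply: mj_least; apply: ov_refl.
Qed.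
Lemma mm00 : mm 0 0 = 0.
Proof.
apply: (ov_anti Hle); first exact: mm_lb2.
by apply: mm_great; apply: ov_refl.
Qed.
Lemma mm_self x y : le x y -> mm x y = x.
Proof.
move=> h; apply: (ov_anti Hle); first exact/Hsl/mm_lb1.
by apply: mm_great => //; apply: ov_refl.
Qed.
Lemma mm_x0 x : sle 0 x -> mm x 0 = 0.
Proof.
move=> h; apply: (ov_anti Hle); first exact: mm_lb2.
by apply: mm_great => //; apply: ov_refl.
Qed.

Lemma ds_pos d : le 0 (d + s d).
Proof. by have := ov_addl Hle d (s_geN d); rewrite subrr. Qed.

Lemma t_spos d1 d2 : sle 0 (s d1 + s d2).
Proof. apply: (ov_pos_add Hsle); apply: s_spos. Qed.

Lemma bound_mj x y x' y' :
  le (mj x y) (mj x' y' + ((x - x') + (s (x - x') + s (y - y')))).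
Proof.
have hx : x = x' + (x - x') by rewrite addrC subrK.
have hy : y = y' + (y - y') by rewrite addrC subrK.
move: (x - x') (y - y') hx hy => d1 d2 -> ->.
apply: mj_least.
  apply: (ov_trans Hsle (y := mj x' y' + d1)).
    exact: (ov_addr Hsle d1 (mj_ub1 x' y')).
  apply: (ov_addl Hsle); by have := ov_addl Hsle d1 (t_spos d1 d2); rewrite addr0.
apply: (ov_add2 Hle); first exact: mj_ub2.
rewrite addrA -[d2]add0r; apply: (ov_add2 Hle); first exact: ds_pos.
by rewrite add0r; exact: s_ge.
Qed.

Lemma bound_mm x y x' y' :
  le (mm x' y' + ((x - x') - (s (x - x') + s (y - y')))) (mm x y).
Proof.
have hx : x = x' + (x - x') by rewrite addrC subrK.
have hy : y = y' + (y - y') by rewrite addrC subrK.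
move: (x - x') (y - y') hx hy => d1 d2 -> ->.
apply: mm_great.
  apply: (ov_trans Hsle (y := mm x' y' + d1)); last first.
    exact: (ov_addr Hsle d1 (mm_lb1 x' y')).
  apply: (ov_addl Hsle).
  have := ov_addr Hsle (d1 - (s d1 + s d2)) (t_spos d1 d2).
  by rewrite add0r; move: (s d1 + s d2) => t; rewrite [t + _]addrC subrK.
apply: (ov_add2 Hle); first exact: mm_lb2.
rewrite opprD addrA -[d2]add0r; apply: (ov_add2 Hle).
  by have := ov_addr Hle (- s d1) (s_ge d1); rewrite subrr.
rewrite add0r -{2}[d2]opprK; apply: (ov_opp Hle); exact: s_geN.
Qed.

Lemma diff_mj x y x' y' :
  le ((x - x') - (s (x - x') + s (y - y'))) (mj x y - mj x' y') /\
  le (mj x y - mj x' y') ((x - x') + (s (x - x') + s (y - y'))).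
Proof.
split; last exact: (ov_sub1 Hle (bound_mj x y x' y')).
have := ov_sub2 Hle (bound_mj x' y' x y).
by rewrite -[x' - x]opprB -[y' - y]opprB !sN opprD !opprK.
Qed.

Lemma diff_mm x y x' y' :
  le ((x - x') - (s (x - x') + s (y - y'))) (mm x y - mm x' y') /\
  le (mm x y - mm x' y') ((x - x') + (s (x - x') + s (y - y'))).
Proof.
split; first exact: (ov_sub3 Hle (bound_mm x y x' y')).
have := ov_sub4 Hle (bound_mm x' y' x y).
by rewrite -[x' - x]opprB -[y' - y]opprB !sN opprD !opprK.
Qed.
End ML.

Section Main.
Context (R : realType) (V : topologicalLmodType R) (le sle : V -> V -> Prop) (mj mm : V -> V -> V).
Hypothesis H : mixed_lattice_vs le sle mj mm.
Let Hle : ordered_vs le. Proof. by case: H => -[]. Qed.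
Let Hsle : ordered_vs sle. Proof. by case: H => -[]. Qed.
Let Hsl x y : sle x y -> le x y. Proof. by case: H => _ _ _ h _; apply: h. Qed.
Local Notation s := (ml_s mj).

Definition scont := forall U : set V, nbhs 0 U -> nbhs 0 (fun x => U (s x)).

Lemma full_scont_unif : locally_P (le_full le) -> scont -> unif_cont2 mj /\ unif_cont2 mm.
Proof.
move=> Hf Hs.
suff key : forall W : set V, nbhs 0 W -> exists U : set V, nbhs 0 U /\
   forall x x' y y', U (x - x') -> U (y - y') ->
     W (mj x y - mj x' y') /\ W (mm x y - mm x' y').
  split=> W /key [U [hU HU]]; exists U; split=> // x x' y y' h1 h2;
  by have [] := HU x x' y y' h1 h2.
move=> W /Hf [F [hF fF FW]].
have [N [hN HN]] := three_small hF.
exists (N `&` (fun x => N (s x))); split; first by apply: filterI => //; exact: Hs.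
move=> x x' y y' [N1 N1s] [_ N2s].
have [A B] := HN _ _ _ N1 N1s N2s.
have [l1 u1] := diff_mj H x y x' y'.
have [l2 u2] := diff_mm H x y x' y'.
by split; apply: FW; [exact: (fF _ _ _ A B l1 u1)|exact: (fF _ _ _ A B l2 u2)].
Qed.

Lemma unif_mixedfull : unif_cont2 mm -> locally_P (mixed_full le sle).
Proof.
move=> hu U hU.
have [U1 [hU1 HU1]] := hu U hU.
pose U' := U1 `&` U.
pose W := fun x => U' x \/ exists y, [/\ U' y, sle 0 x & le x y].
exists W; split.
- by apply: filterS (filterI hU1 hU) => x hx; left.
- move=> x y [Uy|[z [Uz h1 h2]]] sx lxy; right.
    by exists y.
  by exists z; split => //; exact: (ov_trans Hle lxy h2).
- move=> x [[_ //]|[y [[U1y _] sx lxy]]].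
  have := HU1 x x y 0.
  rewrite subrr subr0 (mm_self H lxy) (mm_x0 H sx) subr0; apply => //.
  exact: nbhs_singleton.
Qed.

Lemma a_full : locally_P (symmetric_solid le mj) -> locally_P (le_full le).
Proof.
move=> Ha U /Ha [W [hW sW WU]].
have [N [hN HN]] := sum_small hW.
have [W' [hW' sW' W'N]] := Ha N hN.
pose F := fun z => exists x y, [/\ W' x, W' y, le y z & le z x].
exists F; split.
- apply: (filterS _ hW') => z hz; exists z; exists z.
  by split; [exact: hz|exact: hz|exact: (ov_refl Hle)|exact: (ov_refl Hle)].
- move=> x y z [x1 [x2 [h1 h2 h3 h4]]] [y1 [y2 [k1 k2 k3 k4]]] lyz lzx.
  exists x1, y2; split => //.
    exact: (ov_trans Hle k3 lyz).
  exact: (ov_trans Hle lzx h4).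
- move=> z [x [y [Wx Wy lyz lzx]]].
  apply: WU.
  have sW'p p : W' p -> W' (s p).
    move=> hp; apply: (sW' p (s p) hp); rewrite (s_idem H (s_spos H p)); exact: (ov_refl Hle).
  have Wp : W (s x + s y) by apply: HN; apply: W'N; apply: sW'p.
  apply: (sW _ _ Wp).
  rewrite (s_idem H (t_spos H x y)) /ml_s.
  apply: (ov_add2 Hle).
    apply: (ov_trans Hle (mj_mono H lzx)).
    by have := ov_addl Hle (mj 0 x) (u_pos H (- x)); rewrite addr0.
  apply: (ov_trans Hle (mj_mono H (ov_opp Hle lyz))).
  by have := ov_addr Hle (mj 0 (- y)) (u_pos H y); rewrite add0r.
Qed.

Lemma a_scont : locally_P (symmetric_solid le mj) -> scont.
Proof.
move=> Ha U /Ha [W [hW sW WU]].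
apply: (filterS _ hW) => x Wx; apply: WU; apply: (sW x (s x) Wx).
rewrite (s_idem H (s_spos H x)); exact: (ov_refl Hle).
Qed.

Lemma b_scont : cont_at_zero mj -> scont.
Proof.
move=> hc U hU.
have [N [hN HN]] := sum_small hU.
have := hc; rewrite /cont_at_zero /prop_for /continuous_at /= (mj00 H) => /(_ N hN).
move=> [[P Q] /= [P0 Q0] sub].
apply: filterS (filterI Q0 (neg_small Q0)) => x [Qx Qnx].
apply: HN.
  by apply: (sub (0, x)); split => //; exact: nbhs_singleton.
by apply: (sub (0, - x)); split => //; exact: nbhs_singleton.
Qed.

Lemma b_a : locally_P (le_full le) -> scont -> locally_P (symmetric_solid le mj).
Proof.
move=> Hf Hs U /Hf [F [hF fF FU]].
have hH : nbhs 0 (F `&` (fun x => F (- x))) by apply: filterI => //; exact: neg_small.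
have [G [hG fG GH]] := Hf _ hH.
pose W := fun y => exists x, G (s x) /\ le (s y) (s x).
exists W; split.
- apply: (filterS _ (Hs _ hG)) => x hx; exists x; split; [exact: hx|exact: (ov_refl Hle)].
- move=> x y [z [Gz lxz]] lyx; exists z; split; [exact: Gz|exact: (ov_trans Hle lyx lxz)].
- move=> y [x [Gx lyx]].
  have Gy : G (s y) by apply: (fG _ _ _ Gx (nbhs_singleton hG) (s_pos H y) lyx).
  have [F1 F2] := GH _ Gy.
  have F2' : F (- s y) := F2.
  apply: FU; apply: (fF (s y) (- s y) y F1 F2'); last exact: (s_ge H).
  by rewrite -{2}[y]opprK; apply: (ov_opp Hle); exact: (s_geN H).
Qed.
End Main.

Theorem theorem3p12 (R : realType) (V : topologicalLmodType R)
    (le sle : V -> V -> Prop) (mj mm : V -> V -> V) :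
  mixed_lattice_vs le sle mj mm ->
  let a := locally_P (symmetric_solid le mj) in
  let b := [/\ locally_P (le_full le), cont_at_zero mj & cont_at_zero mm] in
  let c := unif_cont2 mj /\ unif_cont2 mm in
  let d := [/\ locally_P (mixed_full le sle), cont_at_zero mj & cont_at_zero mm] in
  [/\ (a <-> b), (a -> c), (b -> c) & (c -> d)].
Proof.
move=> H a b c d.
have bc : b -> c.
  by case=> hf hmj _; apply: (full_scont_unif H hf (b_scont H hmj)).
have cd : c -> d.
  case=> u1 u2; split.
  - exact: (unif_mixedfull H u2).
  - exact: (cont_from_unif u1 (mj00 H)).
  - exact: (cont_from_unif u2 (mm00 H)).
have ab : a -> b.
  move=> ha; have hf := a_full H ha.
  have [u1 u2] := full_scont_unif H hf (a_scont H ha).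
  split => //; [exact: (cont_from_unif u1 (mj00 H))|exact: (cont_from_unif u2 (mm00 H))].
have ba : b -> a.
  by case=> hf hmj _; apply: (b_a H hf (b_scont H hmj)).
split => //; last by move=> /ab /bc.
Qed.
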